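(* For $n\in\mathbb{N}_{\geq 1}$ let $c_n$ denote the minimal Colless index among all rooted binary trees with $n$ leaves. Then $c_1=c_2=0$, and for all $n\in\mathbb{N}_{\geq 1}$, $$c_{2n}=2c_n,\qquad c_{2n+1}=c_{n+1}+c_n+1.$$
   Context: A rooted binary tree with $n\geq 2$ leaves is a rooted tree whose root has degree 2 and all other internal (non-leaf) nodes have degree 3; for $n=1$ it is a single node (which is both root and leaf). For an internal node $v$ with children $v_1,v_2$, let $\kappa(v_i)$ be the number of leaves descending from $v_i$ (with $\kappa(v_i)=1$ if $v_i$ is a leaf). The Colless index of a rooted binary tree $T$ is $\mathcal{C}(T)=\sum_{v}|\kappa(v_1)-\kappa(v_2)|$, the sum over all internal nodes $v$ of $T$. *)

(* Defs.v *)
From mathcomp Require Import all_boot.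
Set Implicit Arguments. Unset Strict Implicit. Unset Printing Implicit Defensive.

(* Rooted binary trees: a leaf, or an internal node (root or degree-3 vertex)
   with exactly two (unordered in the paper; order is irrelevant here) children. *)
Inductive bintree : Type :=
| Leaf : bintree
| Node : bintree -> bintree -> bintree.

Fixpoint leaves (t : bintree) : nat :=
  match t with
  | Leaf => 1
  | Node l r => leaves l + leaves r
  end.

Fixpoint colless (t : bintree) : nat :=
  match t with
  | Leaf => 0
  | Node l r => colless l + colless r + (maxn (leaves l) (leaves r) - minn (leaves l) (leaves r))
  end.

Definition is_min_colless (n m : nat) : Prop :=
  (exists t, leaves t = n /\ colless t = m) /\
  (forall t, leaves t = n -> m <= colless t).

(* Main.v *)
Require Import Defs.
From mathcomp Require Import all_boot zify.

Fixpoint g k n := if k is k'.+1 then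
  (if n <= 1 then 0 else if odd n then g k' n./2 + g k' (n./2).+1 + 1 else 2 * g k' n./2) else 0.

Lemma g_stable k k' n : n < k -> n < k' -> g k n = g k' n.
Proof.
elim: k k' n => [|k IH] [|k'] n //= H1 H2.
case: ifP => // Hn.
move/negbT: Hn; rewrite -ltnNge => Hn.
have E := odd_double_half n; rewrite -mul2n in E.
case: (odd n) E => /= E.
  rewrite (IH k' n./2) ?(IH k' (n./2).+1) //; lia.
rewrite (IH k' n./2) //; lia.
Qed.

Definition f n := g n.+1 n.

Lemma f0 : f 0 = 0. Proof. by []. Qed.
Lemma f1 : f 1 = 0. Proof. by []. Qed.
Lemma gS k n : g k.+1 n = if n <= 1 then 0 else if odd n then g k n./2 + g k (n./2).+1 + 1 else 2 * g k n./2.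
Proof. by []. Qed.
Lemma f_even x : f (2 * x) = 2 * f x.
Proof.
case: x => [|x] //; rewrite /f gS.
have -> : (2 * x.+1 <= 1) = false by lia.
rewrite mul2n odd_double doubleK -mul2n; congr (2 * _); apply: g_stable; lia.
Qed.
Lemma f_odd x : 1 <= x -> f (2 * x + 1) = f x + f (x + 1) + 1.
Proof.
move=> hx; rewrite /f gS.
have -> : (2 * x + 1 <= 1) = false by lia.
have -> : 2 * x + 1 = true + x.*2 by rewrite -mul2n; lia.
have -> : odd (true + x.*2) = true by rewrite oddD odd_double.
rewrite half_bit_double.
congr (_ + _ + _); rewrite ?addn1; apply: g_stable; rewrite -?mul2n /=; lia.
Qed.

Lemma parity a : exists x, a = 2 * x \/ a = 2 * x + 1.
Proof.
exists a./2; have := odd_double_half a; rewrite -mul2n; case: (odd a) => /=; lia.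
Qed.

Lemma f2 : f 2 = 0. Proof. by []. Qed.

Lemma fP s : forall a b, a + b <= s -> a <= b -> f (a + b) + a <= f a + f b + b.
Proof.
elim: s => [|s IH] a b hs hab.
  have -> : a = 0 by lia. have -> : b = 0 by lia. by [].
move: hs hab; have [x [->|->]] := parity a; have [y [->|->]] := parity b; move=> hs hab.
- case: (posnP (x + y)) => h0.
    have -> : x = 0 by lia. have -> : y = 0 by lia. by [].
  have := IH x y ltac:(lia) ltac:(lia).
  rewrite -mulnDr !f_even; lia.
- case: (posnP x) => hx.
    subst x; rewrite muln0 add0n f0; lia.
  have hy : 1 <= y by lia.
  have := IH x y ltac:(lia) ltac:(lia).
  have := IH x (y + 1) ltac:(lia) ltac:(lia).
  rewrite (_ : 2 * x + (2 * y + 1) = 2 * (x + y) + 1); last by lia.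
  rewrite f_odd ?f_even ?f_odd ?addnA //; lia.
- case: (posnP x) => hx.
    subst x; have hy : 1 <= y by lia.
    have := IH 1 y ltac:(lia) ltac:(lia).
    rewrite muln0 add0n (_ : 1 + 2 * y = 2 * y + 1); last by lia.
    rewrite f_odd // f1 f_even (addnC 1 y); lia.
  have := IH x y ltac:(lia) ltac:(lia).
  have := IH (x + 1) y ltac:(lia) ltac:(lia).
  rewrite (_ : 2 * x + 1 + 2 * y = 2 * (x + y) + 1); last by lia.
  rewrite f_odd ?f_even ?f_odd -?addnA ?(addnC 1 y) //; try lia.
- rewrite (_ : 2 * x + 1 + (2 * y + 1) = 2 * (x + y + 1)); last by lia.
  rewrite f_even.
  case: (posnP x) => hx.
    subst x; case: (posnP y) => hy.
      by subst y.
    have := IH 1 y ltac:(lia) ltac:(lia).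
    rewrite muln0 add0n f_odd // f1 (addnC 1 y); lia.
  have [exy|nxy] := eqVneq x y.
    subst y; have -> : x + x + 1 = 2 * x + 1 by lia. lia.
  have := IH x (y + 1) ltac:(lia) ltac:(lia).
  have := IH (x + 1) y ltac:(lia) ltac:(lia).
  rewrite !f_odd ?addnA; try lia.
  rewrite (addnAC x 1 y); lia.
Qed.

Lemma fP2 a b : f (a + b) <= f a + f b + (maxn a b - minn a b).
Proof.
case: (leqP a b) => h.
  have := @fP (a + b) a b (leqnn _) h; lia.
have h' : b <= a by lia.
have := @fP (b + a) b a (leqnn _) h'; rewrite (addnC b a); lia.
Qed.

Lemma leaves_pos t : 1 <= leaves t.
Proof. elim: t => //= l IHl r IHr; lia. Qed.

Lemma f_lower t : f (leaves t) <= colless t.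
Proof.
elim: t => //= l IHl r IHr.
have := fP2 (leaves l) (leaves r); lia.
Qed.

Lemma f_attained n : 1 <= n -> exists t, leaves t = n /\ colless t = f n.
Proof.
elim: n {-2}n (leqnn n) => [|N IH] n hn h1; first by lia.
case: (leqP n 1) => hn1.
  have -> : n = 1 by lia. by exists Leaf.
have [x [E|E]] := parity n; subst n.
  have [t [Ht Ct]] := IH x ltac:(lia) ltac:(lia).
  exists (Node t t); rewrite /= Ht Ct f_even maxnn minnn subnn; lia.
have [t [Ht Ct]] := IH x ltac:(lia) ltac:(lia).
have [u [Hu Cu]] := IH (x + 1) ltac:(lia) ltac:(lia).
exists (Node t u); rewrite /= Ht Ct Hu Cu f_odd; last by lia.
lia.
Qed.

Theorem theorem1 (c : nat -> nat)
  (hc : forall n, 1 <= n -> is_min_colless n (c n)) :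
  c 1 = 0 /\ c 2 = 0 /\
  (forall n, 1 <= n -> c (2 * n) = 2 * c n /\ c (2 * n + 1) = c (n + 1) + c n + 1).
Proof.
have cf : forall n, 1 <= n -> c n = f n.
  move=> n hn; have [[t [Ht Ct]] Hmin] := hc n hn.
  have [u [Hu Cu]] := @f_attained n hn.
  have := Hmin u Hu; have := f_lower t; rewrite Ht Ct Cu; lia.
rewrite !cf //; split; first by []; split; first by [].
move=> n hn; rewrite !cf ?f_even ?f_odd //; try lia.
Qed.
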